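(* Let $\Delta\vdash t$ be a closed nominal term-in-context and $\sigma$ a nominal substitution satisfying $\Delta$ with domain contained in the variables of $t$ and $t\sigma$ ground. Let $\pi_i\cdot X$ and $\pi_j\cdot X$ be two occurrences of the same variable $X$ in $t$, and let $[X\mapsto\underline{\lambda}(\overline{xs}_i).s_i]$ and $[X\mapsto\underline{\lambda}(\overline{xs}_j).s_j]$ be the substitutes obtained by the substitution translation using $\pi_i$, respectively $\pi_j$, in place of the permutation of the leftmost occurrence. Then $\underline{\lambda}(\overline{xs}_i).s_i$ and $\underline{\lambda}(\overline{xs}_j).s_j$ are $\alpha$-equivalent.
   Context: Nominal terms: $s,t ::= a \mid \pi\cdot X \mid [a]s \mid f\,s \mid (s_1,\ldots,s_n)$ over atoms, variables, function symbols and finite-support permutations $\pi$ of atoms acting on terms in the usual nominal way. A freshness context $\Delta$ is a set of constraints $a\#X$; $\sigma$ satisfies $\Delta$ if $\vdash a\#X\sigma$ for all $a\#X\in\Delta$ (standard nominal freshness). Substitutions map variables to terms, applied without avoiding capture. $\Delta\vdash t$ is closed if: (1) every atom occurrence $a$ in $t$ lies under an abstraction $[a]$; (2) if $\pi\cdot X$ is in the scope of an abstraction of $\pi(a)$ then every occurrence $\pi'\cdot X$ of $X$ in $t$ is in the scope of an abstraction of $\pi'(a)$, or $a\#X\in\Delta$; (3) for two occurrences $\pi_1\cdot X,\pi_2\cdot X$ and $a$ with $\pi_1(a)\neq\pi_2(a)$, if $a$ is not abstracted in one of the occurrences then $a\#X\in\Delta$. Translation: $\Lambda_t(X)$ is the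 set of atoms $a$ such that some occurrence of $X$ in $t$ is in the scope of $[a]$. Fix a total order on atoms. $\mathcal{T}(\Delta,u)$ maps a nominal term $u$ to a CRS meta-term by keeping atoms, abstractions, function applications and tuples and replacing each $\pi\cdot Y$ by $Y(\pi\cdot ys)$ with $ys$ the ascending list of $\{\pi^{-1}(a)\mid a\in\Lambda_u(Y)\}\setminus\{a\mid a\#Y\in\Delta\}$. For a permutation $\rho$ of an occurrence $\rho\cdot X$ of $X$ in $t$, the substitute translating $\sigma(X)$ with respect to $\rho$ is $\underline{\lambda}(\rho\cdot xs).\mathcal{T}(\Delta,\rho\cdot\sigma(X))$, where $xs$ is the ascending list of $\{\rho^{-1}(a)\mid a\in\Lambda_t(X)\}\setminus\{a\mid a\#X\in\Delta\}$ and $\rho$ is applied elementwise. A CRS substitute $\underline{\lambda}(a_1,\dots,a_n).s$ binds $a_1,\dots,a_n$ in $s$; $\alpha$-equivalence means equality up to renaming of these and other bound variables. *)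

(* Defs.v *)
(* MathComp (boot) world: atoms, variables and function symbols are nat;
   the fixed total order on atoms is the usual order <= on nat. *)
From mathcomp Require Import all_boot.
Set Implicit Arguments. Unset Strict Implicit. Unset Printing Implicit Defensive.

(* A finite-support permutation of atoms is represented by a list of swaps;
   every finite-support permutation arises this way.  The list is applied
   right-to-left, so [perm_atom (p ++ q) = perm_atom p \o perm_atom q]. *)
Definition perm := seq (nat * nat).

Definition swap_atom (s : nat * nat) (c : nat) : nat :=
  if c == s.1 then s.2 else if c == s.2 then s.1 else c.

Fixpoint perm_atom (p : perm) (c : nat) : nat :=
  match p with
  | [::] => c
  | s :: p' => swap_atom s (perm_atom p' c)
  end.

Definition perm_inv (p : perm) : perm := rev p.

Inductive nterm : Type :=
| NAtom : nat -> nterm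
| NSusp : perm -> nat -> nterm
| NAbs  : nat -> nterm -> nterm
| NApp  : nat -> nterm -> nterm
| NTup  : seq nterm -> nterm.

Fixpoint nact (p : perm) (t : nterm) : nterm :=
  match t with
  | NAtom a => NAtom (perm_atom p a)
  | NSusp q X => NSusp (p ++ q) X
  | NAbs a s => NAbs (perm_atom p a) (nact p s)
  | NApp f s => NApp f (nact p s)
  | NTup ts => NTup (map (nact p) ts)
  end.

(* nominal substitution: [sigma X = None] means X is not in the domain *)
Definition nsubst := nat -> option nterm.

Definition sigma_at (sigma : nsubst) (X : nat) : nterm :=
  match sigma X with Some s => s | None => NSusp [::] X end.

(* application of a substitution (no capture avoidance) *)
Fixpoint napply (sigma : nsubst) (t : nterm) : nterm :=
  match t with
  | NAtom a => NAtom a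
  | NSusp p X => nact p (sigma_at sigma X)
  | NAbs a s => NAbs a (napply sigma s)
  | NApp f s => NApp f (napply sigma s)
  | NTup ts => NTup (map (napply sigma) ts)
  end.

(* freshness contexts: (a, X) stands for a # X *)
Definition fctx := seq (nat * nat).

Fixpoint fresh (D : fctx) (a : nat) (t : nterm) : Prop :=
  match t with
  | NAtom b => a <> b
  | NSusp p X => (perm_atom (perm_inv p) a, X) \in D
  | NAbs b s => a = b \/ fresh D a s
  | NApp _ s => fresh D a s
  | NTup ts => (fix go (l : seq nterm) : Prop :=
                 match l with [::] => True | u :: l' => fresh D a u /\ go l' end) ts
  end.

Definition satisfies (D : fctx) (sigma : nsubst) : Prop :=
  forall a X, (a, X) \in D -> fresh [::] a (napply sigma (NSusp [::] X)).

Fixpoint ground (t : nterm) : Prop :=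
  match t with
  | NAtom _ => True
  | NSusp _ _ => False
  | NAbs _ s | NApp _ s => ground s
  | NTup ts => (fix go (l : seq nterm) : Prop :=
                 match l with [::] => True | u :: l' => ground u /\ go l' end) ts
  end.

Fixpoint vars (t : nterm) : seq nat :=
  match t with
  | NAtom _ => [::]
  | NSusp _ X => [:: X]
  | NAbs _ s | NApp _ s => vars s
  | NTup ts => flatten (map vars ts)
  end.

(* Occurrences of variables: (pi, X, bs) means an occurrence pi . X lying in
   the scope of abstractions of exactly the atoms in bs. *)
Fixpoint occs_aux (bs : seq nat) (t : nterm) : seq (perm * nat * seq nat) :=
  match t with
  | NAtom _ => [::]
  | NSusp p X => [:: (p, X, bs)]
  | NAbs a s => occs_aux (a :: bs) s
  | NApp _ s => occs_aux bs s
  | NTup ts => flatten (map (occs_aux bs) ts)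
  end.

Definition occs (t : nterm) := occs_aux [::] t.

Fixpoint atoms_bound (bs : seq nat) (t : nterm) : Prop :=
  match t with
  | NAtom a => a \in bs
  | NSusp _ _ => True
  | NAbs a s => atoms_bound (a :: bs) s
  | NApp _ s => atoms_bound bs s
  | NTup ts => (fix go (l : seq nterm) : Prop :=
                 match l with [::] => True | u :: l' => atoms_bound bs u /\ go l' end) ts
  end.

Definition nom_closed (D : fctx) (t : nterm) : Prop :=
  (* (1) *)
  atoms_bound [::] t /\
  (* (2) *)
  (forall p X bs a, (p, X, bs) \in occs t -> perm_atom p a \in bs ->
     (forall p' bs', (p', X, bs') \in occs t -> perm_atom p' a \in bs')
     \/ (a, X) \in D) /\
  (* (3) *)
  (forall p1 bs1 p2 bs2 X a,
     (p1, X, bs1) \in occs t -> (p2, X, bs2) \in occs t ->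
     perm_atom p1 a <> perm_atom p2 a ->
     (perm_atom p1 a \notin bs1 \/ perm_atom p2 a \notin bs2) ->
     (a, X) \in D).

Definition Lam (t : nterm) (X : nat) : seq nat :=
  flatten [seq o.2 | o <- occs t & o.1.2 == X].

Definition asc_args (D : fctx) (t : nterm) (X : nat) (rho : perm) : seq nat :=
  sort leq (undup [seq b <- map (perm_atom (perm_inv rho)) (Lam t X)
                   | (b, X) \notin D]).

Inductive mterm : Type :=
| MAtom : nat -> mterm
| MAbs  : nat -> mterm -> mterm
| MApp  : nat -> mterm -> mterm
| MTup  : seq mterm -> mterm
| MMeta : nat -> seq nat -> mterm.

(* T(D, u); [whole] is u, used for Lambda_u *)
Fixpoint trans_aux (D : fctx) (whole : nterm) (t : nterm) : mterm :=
  match t with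
  | NAtom a => MAtom a
  | NSusp p Y => MMeta Y (map (perm_atom p) (asc_args D whole Y p))
  | NAbs a s => MAbs a (trans_aux D whole s)
  | NApp f s => MApp f (trans_aux D whole s)
  | NTup ts => MTup (map (trans_aux D whole) ts)
  end.

Definition trans (D : fctx) (u : nterm) : mterm := trans_aux D u u.

(* CRS substitute  lambda(a1,...,an). s  *)
Definition substitute := (seq nat * mterm)%type.

Definition subst_transl (D : fctx) (t : nterm) (sigma : nsubst) (X : nat)
    (rho : perm) : substitute :=
  (map (perm_atom rho) (asc_args D t X rho), trans D (nact rho (sigma_at sigma X))).

(* bound atoms are compared by the position of their (innermost) binder *)
Definition atom_rel (l1 l2 : seq nat) (a b : nat) : bool :=
  if (a \in l1) || (b \in l2) then (a \in l1) && (b \in l2) && (index a l1 == index b l2)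
  else a == b.

Fixpoint aeq (l1 l2 : seq nat) (m n : mterm) : Prop :=
  match m, n with
  | MAtom a, MAtom b => atom_rel l1 l2 a b
  | MAbs a m', MAbs b n' => aeq (a :: l1) (b :: l2) m' n'
  | MApp f m', MApp g n' => f = g /\ aeq l1 l2 m' n'
  | MTup ms, MTup ns =>
      (fix go (xs ys : seq mterm) : Prop :=
         match xs, ys with
         | [::], [::] => True
         | x :: xs', y :: ys' => aeq l1 l2 x y /\ go xs' ys'
         | _, _ => False
         end) ms ns
  | MMeta Z as_, MMeta Z' bs =>
      Z = Z' /\ size as_ = size bs /\
      (forall i, i < size as_ -> atom_rel l1 l2 (nth 0 as_ i) (nth 0 bs i))
  | _, _ => False
  end.

Definition subst_aeq (s1 s2 : substitute) : Prop :=
  size s1.1 = size s2.1 /\ aeq s1.1 s2.1 s1.2 s2.2.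

(* Main.v *)
Require Import Defs.
From mathcomp Require Import all_boot.
Set Implicit Arguments. Unset Strict Implicit. Unset Printing Implicit Defensive.

Section Ind.
Variables (P : nterm -> Prop) (Q : seq nterm -> Prop).
Hypotheses (HA : forall a, P (NAtom a)) (HS : forall p X, P (NSusp p X))
  (HB : forall a s, P s -> P (NAbs a s)) (HP : forall f s, P s -> P (NApp f s))
  (HT : forall ts, Q ts -> P (NTup ts)) (Hnil : Q [::])
  (Hcons : forall u ts, P u -> Q ts -> Q (u :: ts)).
Fixpoint nind (t : nterm) : P t :=
  match t with
  | NAtom a => HA a
  | NSusp p X => HS p X
  | NAbs a s => HB a (nind s)
  | NApp f s => HP f (nind s)
  | NTup ts => HT ((fix go (l : seq nterm) : Q l :=
       match l with [::] => Hnil | u :: l' => Hcons (nind u) (go l') end) ts)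
  end.
End Ind.

Fixpoint fa (t : nterm) : seq nat :=
  match t with
  | NAtom a => [:: a]
  | NSusp _ _ => [::]
  | NAbs a s => filter (predC1 a) (fa s)
  | NApp _ s => fa s
  | NTup ts => flatten (map fa ts)
  end.

Lemma swapK s : involutive (swap_atom s).
Proof.
move=> c; rewrite /swap_atom.
case: (eqVneq c s.1) => [->|h1]; first by rewrite eqxx; case: eqVneq.
case: (eqVneq c s.2) => [->|h2]; first by rewrite eqxx.
by rewrite (negbTE h1) (negbTE h2).
Qed.

Lemma perm_atom_cat p q c : perm_atom (p ++ q) c = perm_atom p (perm_atom q c).
Proof. by elim: p => //= s p ->. Qed.

Lemma perm_atomK p : cancel (perm_atom p) (perm_atom (perm_inv p)).
Proof.
elim: p => //= s p IH c; rewrite /perm_inv rev_cons -cats1 perm_atom_cat /=.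
by rewrite swapK; apply: IH.
Qed.

Lemma perm_atom_inj p : injective (perm_atom p).
Proof. exact: can_inj (perm_atomK p). Qed.

Lemma fresh_fa e s : fresh [::] e s -> e \in fa s -> False.
Proof.
move: s; apply: (@nind (fun s => fresh [::] e s -> e \in fa s -> False) (fun ts => (fix go (l : seq nterm) : Prop :=
   match l with [::] => True | u :: l' => fresh [::] e u /\ go l' end) ts ->
   e \in flatten (map fa ts) -> False)) => //=.
- by move=> a h; rewrite inE => /eqP.
- by move=> a s IH [->|h]; rewrite mem_filter /= ?eqxx // => /andP[_ /(IH h)].
- by move=> u ts IHu IHts [h1 h2]; rewrite mem_cat => /orP[/(IHu h1)|/(IHts h2)].
Qed.

Lemma nact_nil s : nact [::] s = s.
Proof.
move: s; apply: (@nind (fun s => nact [::] s = s) (fun ts => map (nact [::]) ts = ts)) => //=.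
- by move=> a s ->.
- by move=> f s ->.
- by move=> ts ->.
- by move=> u ts -> ->.
Qed.

Lemma ground_nact p s : ground (nact p s) -> ground s.
Proof.
move: s; apply: (@nind (fun s => ground (nact p s) -> ground s) (fun ts => (fix go (l : seq nterm) : Prop :=
   match l with [::] => True | u :: l' => ground u /\ go l' end) (map (nact p) ts) ->
   (fix go (l : seq nterm) : Prop :=
   match l with [::] => True | u :: l' => ground u /\ go l' end) ts)) => //=.
- by move=> u ts IHu IHts [h1 h2]; split; [apply: IHu|apply: IHts].
Qed.

Lemma ground_occ sigma X p bs t bs0 :
  (p, X, bs) \in occs_aux bs0 t -> ground (napply sigma t) ->
  ground (nact p (sigma_at sigma X)).
Proof.
move: t bs0; apply: (@nind (fun t => forall bs0, (p, X, bs) \in occs_aux bs0 t -> ground (napply sigma t) -> ground (nact p (sigma_at sigma X))) (fun ts => forall bs0, (p, X, bs) \in flatten (map (occs_aux bs0) ts) ->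
   (fix go (l : seq nterm) : Prop :=
   match l with [::] => True | u :: l' => ground u /\ go l' end) (map (napply sigma) ts) ->
   ground (nact p (sigma_at sigma X)))) => //=.
- by move=> q Y bs0; rewrite inE => /eqP [hp hX _] g; rewrite hp hX.
- by move=> a s IH bs0 h; apply: IH h.
- move=> u ts IHu IHts bs0; rewrite mem_cat => /orP[h [g _]|h [_ g]].
  + exact: IHu h g.
  + exact: IHts h g.
Qed.

Lemma aeq_trans p1 p2 D w1 w2 s L :
  ground s ->
  (forall e, e \in fa s -> e \notin L -> perm_atom p1 e = perm_atom p2 e) ->
  aeq (map (perm_atom p1) L) (map (perm_atom p2) L)
      (trans_aux D w1 (nact p1 s)) (trans_aux D w2 (nact p2 s)).
Proof.
move: s L; apply: (@nind (fun s => forall L, ground s -> (forall e, e \in fa s -> e \notin L -> perm_atom p1 e = perm_atom p2 e) -> aeq (map (perm_atom p1) L) (map (perm_atom p2) L) (trans_aux D w1 (nact p1 s)) (trans_aux D w2 (nact p2 s))) (fun ts => forall L, (fix go (l : seq nterm) : Prop :=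
   match l with [::] => True | u :: l' => ground u /\ go l' end) ts ->
  (forall e, e \in flatten (map fa ts) -> e \notin L -> perm_atom p1 e = perm_atom p2 e) ->
   (fix go (xs ys : seq mterm) : Prop :=
         match xs, ys with
         | [::], [::] => True
         | x :: xs', y :: ys' => aeq (map (perm_atom p1) L) (map (perm_atom p2) L) x y /\ go xs' ys'
         | _, _ => False
         end) (map (trans_aux D w1) (map (nact p1) ts))
              (map (trans_aux D w2) (map (nact p2) ts)))) => //=.
- move=> a L _ h; rewrite /atom_rel !(mem_map (@perm_atom_inj _)).
  case: (boolP (a \in L)) => aL /=.
  + by rewrite !index_map //; apply: perm_atom_inj.
  + by rewrite h ?inE.
- move=> a s IH L g h; apply: (IH (a :: L)) => // e es.
  rewrite inE negb_or => /andP[ea eL]; apply: h eL.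
  by rewrite mem_filter /= ea.
- by move=> f s IH L g h; split => //; apply: IH.
- move=> u ts IHu IHts L [g1 g2] h; split.
  + by apply: IHu => // e e1; apply: h; rewrite mem_cat e1.
  + by apply: IHts => // e e1; apply: h; rewrite mem_cat e1 orbT.
Qed.

Lemma Lam_mem t X y : y \in Lam t X -> exists p bs, (p, X, bs) \in occs t /\ y \in bs.
Proof.
rewrite /Lam => /flattenP [bs /mapP [[[p Y] bs'] hin hbs] hy].
move: hin; rewrite mem_filter /= => /andP[/eqP eY hin].
exists p, bs'; rewrite -eY; split => //; by rewrite hbs in hy.
Qed.

Lemma Lam_in t X p bs y : (p, X, bs) \in occs t -> y \in bs -> y \in Lam t X.
Proof.
move=> h hy; rewrite /Lam; apply/flattenP; exists bs => //.
apply/mapP; exists (p, X, bs) => //.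
by rewrite mem_filter /= eqxx.
Qed.

Lemma asc_mem (D : fctx) (t : nterm) (X : nat) (rho : perm) (c : nat) :
  (c \in [seq b <- map (perm_atom (perm_inv rho)) (Lam t X) | (b, X) \notin D]) =
  ((c, X) \notin D) && (perm_atom rho c \in Lam t X).
Proof.
rewrite mem_filter; congr (_ && _); apply/mapP/idP.
- move=> [y hy ->]; have := perm_atomK (perm_inv rho) y.
  by rewrite {1}/perm_inv revK => ->.
- move=> h; exists (perm_atom rho c) => //; by rewrite perm_atomK.
Qed.

Lemma Lam_transfer (D : fctx) (t : nterm) (X : nat) (pi_i pi_j : perm) (bs_i bs_j : seq nat) (c : nat) :
  nom_closed D t -> (pi_i, X, bs_i) \in occs t -> (pi_j, X, bs_j) \in occs t ->
  (c, X) \notin D ->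
  perm_atom pi_i c \in Lam t X -> perm_atom pi_j c \in Lam t X.
Proof.
move=> [_ [_ H3]] hi hj cD hL.
case: (boolP (perm_atom pi_j c \in bs_j)) => hb; first exact: Lam_in hj hb.
case: (eqVneq (perm_atom pi_j c) (perm_atom pi_i c)) => [->//|/eqP ne].
by have := H3 _ _ _ _ _ _ hj hi ne (or_introl hb); rewrite (negbTE cD).
Qed.

Theorem mainTheorem10 (D : fctx) (t : nterm) (sigma : nsubst) (X : nat)
    (pi_i pi_j : perm) (bs_i bs_j : seq nat) :
  nom_closed D t ->
  satisfies D sigma ->
  (forall Y, sigma Y <> None -> Y \in vars t) ->
  ground (napply sigma t) ->
  (pi_i, X, bs_i) \in occs t ->
  (pi_j, X, bs_j) \in occs t ->
  subst_aeq (subst_transl D t sigma X pi_i) (subst_transl D t sigma X pi_j).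
Proof.
move=> Hc Hs _ Hg hi hj.
have Easc : asc_args D t X pi_i = asc_args D t X pi_j.
  rewrite /asc_args; apply/perm_sortP; [exact: leq_total|exact: leq_trans|exact: anti_leq|].
  apply: uniq_perm; rewrite ?undup_uniq // => c; rewrite !mem_undup !asc_mem.
  case: (boolP ((c, X) \in D)) => //= cD; apply/idP/idP.
  - exact: Lam_transfer hi hj cD.
  - exact: Lam_transfer hj hi cD.
rewrite /subst_transl /subst_aeq /= Easc !size_map; split => //.
rewrite /trans; apply: aeq_trans.
  by apply: (ground_nact (p:=pi_i)); apply: ground_occ hi Hg.
move=> e ef eA; apply/eqP; apply/negPn/negP => ne.
case: (boolP ((e, X) \in D)) => eD.
  have := Hs _ _ eD; rewrite /= nact_nil => /fresh_fa; exact.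
have [_ [_ H3]] := Hc.
case: (boolP (perm_atom pi_i e \in bs_i)) => hb.
  case: (boolP (perm_atom pi_j e \in bs_j)) => hb2.
    move: eA; rewrite /asc_args mem_sort mem_undup asc_mem eD /=.
    by rewrite (Lam_in hj hb2).
  by have := H3 _ _ _ _ _ _ hi hj (elimN eqP ne) (or_intror hb2); rewrite (negbTE eD).
by have := H3 _ _ _ _ _ _ hi hj (elimN eqP ne) (or_introl hb); rewrite (negbTE eD).
Qed.
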